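(* Let $n\ge 2$, let $\mathbb{F}_q$ be a finite field with $q$ elements, let $UU_n(\mathbb{F}_q)$ be the group of $n\times n$ upper triangular unipotent matrices over $\mathbb{F}_q$, and let \[S_0=\{A=(a_{ij})\in UU_n(\mathbb{F}_q): \textstyle\prod_{i=1}^{n-1}a_{i,i+1}\neq 0\}.\] Then $\omega(S_0)=(q-1)^{n-2}q^{\binom{n-2}{2}}$.
   Context: A subset $N$ of a group is non-commuting if $xy\ne yx$ for all distinct $x,y\in N$; for a subset $S$ of a group, $\omega(S)$ is the maximum cardinality of a non-commuting subset of $S$. *)

(* Defs.v *)
From mathcomp Require Import all_boot all_order all_algebra.
Set Implicit Arguments. Unset Strict Implicit. Unset Printing Implicit Defensive.
Import GRing.Theory.
Local Open Scope ring_scope.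

Definition unitriangular (F : finFieldType) (n : nat) (A : 'M[F]_n) : bool :=
  [forall i : 'I_n, forall j : 'I_n,
     ((j < i)%N ==> (A i j == 0)) && ((i == j) ==> (A i j == 1))].

Definition UU (F : finFieldType) (n : nat) : {set 'M[F]_n} :=
  [set A | unitriangular A].

Definition S0 (F : finFieldType) (n : nat) : {set 'M[F]_n} :=
  [set A in UU F n |
     [forall i : 'I_n, forall j : 'I_n, (j == i.+1 :> nat) ==> (A i j != 0)]].

Definition noncommuting (F : finFieldType) (n : nat) (N : {set 'M[F]_n}) : bool :=
  [forall x in N, forall y in N, (x != y) ==> (x *m y != y *m x)].

Definition omega (F : finFieldType) (n : nat) (S : {set 'M[F]_n}) : nat :=
  \max_(N : {set 'M[F]_n} | (N \subset S) && noncommuting N) #|N|.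

(* Main.v *)
Require Import Defs.
From mathcomp Require Import all_boot all_order all_algebra zify.
Set Implicit Arguments. Unset Strict Implicit. Unset Printing Implicit Defensive.
Import GRing.Theory.

Lemma sumA k n : \sum_(0 <= j < n) nat_of_bool (j == k) = nat_of_bool (k < n).
Proof.
elim: n => [|n IH]; first by rewrite big_geq.
rewrite big_nat_recr //= IH; case: (ltngtP k n) => h.
- have e1 : (n == k) = false by apply/eqP; lia.
  have e2 : (k < n.+1) = true by lia.
  by rewrite ?e1 ?e2.
- have e1 : (n == k) = false by apply/eqP; lia.
  have e2 : (k < n.+1) = false by lia.
  have e3 : (k < n) = false by lia.
  by rewrite ?e1 ?e2 ?e3.
- by rewrite ?h ?eqxx ?ltnn ?ltnSn.
Qed.

Lemma sumB k n : \sum_(0 <= j < n) nat_of_bool (k < j) = n - k.+1.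
Proof.
elim: n => [|n IH]; first by rewrite big_geq.
rewrite big_nat_recr //= IH; case: (ltnP k n) => h /=; lia.
Qed.

Lemma sumC k n : \sum_(0 <= i < n) nat_of_bool (i < k) = minn k n.
Proof.
elim: n => [|n IH]; first by rewrite big_geq // minn0.
rewrite big_nat_recr //= IH; case: (ltnP n k) => h /=; lia.
Qed.

Lemma cnt1 m : \sum_(x : 'I_m.+2 * 'I_m.+2) nat_of_bool ((0 < x.1) && (x.2 == x.1.+1 :> nat)) = m.
Proof.
rewrite -(pair_bigA _ (fun (i j : 'I_m.+2) => nat_of_bool ((0 < i) && (j == i.+1 :> nat)))) /=.
rewrite (eq_bigr (fun i : 'I_m.+2 => nat_of_bool ((0 < i) && (i.+1 < m.+2)))); last first.
  move=> i _; case: (posnP i) => hi /=.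
    by rewrite big1 // => j _; rewrite hi.
  rewrite -(big_mkord xpredT (fun j => nat_of_bool (j == i.+1))) sumA.
  by case: (i.+1 < m.+2).
rewrite -(big_mkord xpredT (fun i => nat_of_bool ((0 < i) && (i.+1 < m.+2)))).
rewrite big_nat_recl //= add0n.
rewrite (eq_bigr (fun i => nat_of_bool (i < m))); last by move=> i _; congr nat_of_bool; lia.
by rewrite sumC; lia.
Qed.

Lemma cnt2 m : \sum_(x : 'I_m.+2 * 'I_m.+2) nat_of_bool ((0 < x.1) && (x.1.+1 < x.2)) = 'C(m, 2).
Proof.
rewrite -(pair_bigA _ (fun (i j : 'I_m.+2) => nat_of_bool ((0 < i) && (i.+1 < j)))) /=.
rewrite (eq_bigr (fun i : 'I_m.+2 => (0 < i) * (m.+2 - i.+2))); last first.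
  move=> i _; case: (posnP i) => hi /=.
    by rewrite big1 // => j _; rewrite hi.
  rewrite -(big_mkord xpredT (fun j => nat_of_bool (i.+1 < j))) sumB.
  by rewrite mul1n.
rewrite -(big_mkord xpredT (fun i => (0 < i) * (m.+2 - i.+2))).
rewrite big_nat_recl //= mul0n add0n.
rewrite big_nat_recr //= (_ : m.+2 - m.+3 = 0) ?addn0; last by lia.
rewrite big_nat_rev /= -bin2_sum; apply: eq_big_nat => i hi.
by rewrite mul1n; lia.
Qed.
Local Open Scope ring_scope.

Section S.
Variables (F : finFieldType) (m : nat).
Local Notation n := m.+2.
Implicit Types (A B N M : 'M[F]_n).

Definition supd N := (forall i j : 'I_n, (j <= i)%N -> N i j = 0) /\
                     (forall i j : 'I_n, j = i.+1 :> nat -> N i j != 0).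

Lemma one_mxE (i j : 'I_n) : (1 : 'M[F]_n) i j = (i == j)%:R.
Proof. by rewrite -idmxE mxE. Qed.

Lemma pow_entries N : supd N -> forall k (i j : 'I_n),
  ((j < i + k)%N -> (N ^+ k) i j = 0) /\ (j = (i + k)%N :> nat -> (N ^+ k) i j != 0).
Proof.
move=> [N0 N1]; elim=> [|k IH] i j.
  rewrite expr0 one_mxE addn0; split.
    by move=> h; rewrite (_ : (i == j) = false) // eq_sym; apply/negbTE; rewrite neq_ltn h.
  by move=> /val_inj ->; rewrite eqxx oner_neq0.
rewrite exprSr -mulmxE mxE; split.
  move=> hj; apply: big1 => l _.
  case: (ltnP l (i + k)%N) => hl; first by rewrite (proj1 (IH i l) hl) mul0r.
  by rewrite N0 ?mulr0 //; apply: leq_trans hl; rewrite -ltnS -addnS.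
move=> hj.
have hl : (i + k < n)%N by have := ltn_ord j; lia.
rewrite (bigD1 (Ordinal hl)) //= big1 ?addr0.
  by rewrite mulf_neq0 //; [apply: (proj2 (IH i _)) | apply: N1; rewrite hj addnS].
move=> l /eqP hne.
case: (ltngtP l (i + k)%N) => hl'.
- by rewrite (proj1 (IH i l) hl') mul0r.
- by rewrite N0 ?mulr0 // hj addnS.
- by exfalso; apply: hne; apply: val_inj.
Qed.

Definition Pmx N : 'M[F]_n := \matrix_(j, k) (N ^+ k) ord0 j.

Lemma Pmx_unit N : supd N -> Pmx N \in unitmx.
Proof.
move=> hN; rewrite unitmxE unitfE det_trig.
  apply/prodf_neq0 => j _; rewrite mxE.
  by apply: (proj2 (pow_entries hN j ord0 j)).
apply/is_trig_mxP => j k hjk; rewrite mxE.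
by apply: (proj1 (pow_entries hN k ord0 j)).
Qed.

Definition polyc N (c : 'cV[F]_n) : 'M[F]_n := \sum_(k < n) c k ord0 *: N ^+ k.

Lemma polyc_row N c j : polyc N c ord0 j = (Pmx N *m c) j ord0.
Proof.
rewrite summxE !mxE; apply: eq_bigr => k _; by rewrite !mxE mulrC.
Qed.

Definition solve N (v : 'cV[F]_n) := polyc N (invmx (Pmx N) *m v).

Lemma solve_row N v : supd N -> forall j, solve N v ord0 j = v j ord0.
Proof. by move=> hN j; rewrite polyc_row mulKVmx // Pmx_unit. Qed.

Lemma polyc_comm N c d : GRing.comm (polyc N c) (polyc N d).
Proof.
rewrite /polyc; apply: commr_sum => k _; apply: commr_sym; apply: commr_sum => l _.
by rewrite /GRing.comm -!scalerAl -!scalerAr !scalerA -!exprD addnC mulrC.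
Qed.

Lemma polyc_commN N c : GRing.comm N (polyc N c).
Proof.
rewrite /polyc; apply: commr_sum => k _.
by rewrite /GRing.comm -scalerAr -scalerAl -exprS -exprSr.
Qed.

Lemma uniq_row0 N M : supd N -> GRing.comm N M -> (forall j, M ord0 j = 0) -> M = 0.
Proof.
move=> hN hc h0.
suff H : forall t (k : 'I_n), (n <= k + t)%N -> forall l, M k l = 0.
  by apply/matrixP => k l; rewrite (H n) ?mxE // leq_addl.
elim=> [|t IH] k hk l; first by have := ltn_ord k; lia.
have e : (N ^+ k * M) ord0 l = (M * N ^+ k) ord0 l.
  by rewrite (commrX k (commr_sym hc)).
have : (M * N ^+ k) ord0 l = 0.
  by rewrite -mulmxE mxE big1 // => j _; rewrite h0 mul0r.
rewrite -e -mulmxE mxE (bigD1 k) //= big1 ?addr0.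
  by move/eqP; rewrite mulf_eq0 (negbTE (proj2 (pow_entries hN k ord0 k) erefl)) => /eqP.
move=> j hj; case: (ltngtP j k) => hjk.
- by rewrite (proj1 (pow_entries hN k ord0 j) hjk) mul0r.
- by rewrite (IH j) ?mulr0 //; lia.
- by exfalso; move/eqP: hj; apply; apply: val_inj.
Qed.

Definition colv M : 'cV[F]_n := \col_j M ord0 j.

Lemma comm_solve N X : supd N -> GRing.comm N X -> X = solve N (colv X).
Proof.
move=> hN hX; apply/eqP; rewrite -subr_eq0; apply/eqP; apply: (uniq_row0 hN).
  by apply: commrB => //; apply: polyc_commN.
by move=> j; rewrite !mxE solve_row // mxE subrr.
Qed.

Lemma comm_trans N X Y : supd N -> GRing.comm N X -> GRing.comm N Y -> GRing.comm X Y.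
Proof.
move=> hN hX hY; rewrite (comm_solve hN hX) (comm_solve hN hY); apply: polyc_comm.
Qed.

Lemma S0P A : reflect [/\ forall i j : 'I_n, (j < i)%N -> A i j = 0,
                        forall i, A i i = 1 &
                        forall i j : 'I_n, j = i.+1 :> nat -> A i j != 0] (A \in S0 F n).
Proof.
rewrite !inE /unitriangular; apply: (iffP andP).
  move=> [/forallP H1 /forallP H2]; split.
  - by move=> i j hij; move/forallP: (H1 i) => /(_ j) /andP [/implyP /(_ hij) /eqP].
  - by move=> i; move/forallP: (H1 i) => /(_ i) /andP [_ /implyP /(_ (eqxx _)) /eqP].
  - by move=> i j hij; move/forallP: (H2 i) => /(_ j) /implyP; apply; apply/eqP.
move=> [H1 H2 H3]; split; apply/forallP => i; apply/forallP => j.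
  apply/andP; split; apply/implyP.
    by move=> h; rewrite H1.
  by move=> /eqP <-; rewrite H2.
by apply/implyP => /eqP; apply: H3.
Qed.

Lemma subEnt A (i j : 'I_n) : (A - 1) i j = A i j - (i == j)%:R.
Proof. by rewrite !mxE. Qed.

Lemma supd_S0 A : A \in S0 F n -> supd (A - 1).
Proof.
move/S0P => [H1 H2 H3]; split => i j hij.
  rewrite subEnt; case: (ltngtP j i) hij => // h _.
    by rewrite H1 // (_ : (i == j) = false) ?subrr //; apply/negbTE; rewrite neq_ltn h orbT.
  by move/val_inj: h => ->; rewrite H2 eqxx subrr.
by rewrite subEnt (_ : (i == j) = false) ?subr0 ?H3 //; apply/eqP => e; move: hij; rewrite e; lia.
Qed.

Lemma polyc_low N c (i j : 'I_n) : supd N -> (j < i)%N -> polyc N c i j = 0.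
Proof.
move=> hN hij; rewrite summxE big1 // => k _; rewrite mxE.
by rewrite (proj1 (pow_entries hN k i j)) ?mulr0 //; apply: leq_trans hij (leq_addr _ _).
Qed.

Lemma polyc_diag N c (i : 'I_n) : supd N -> polyc N c i i = c ord0 ord0.
Proof.
move=> hN; rewrite summxE big_ord_recl big1 ?addr0.
  by rewrite mxE expr0 one_mxE eqxx mulr1.
move=> k _; rewrite mxE (proj1 (pow_entries hN _ i i)) ?mulr0 //=.
by rewrite /bump /=; lia.
Qed.

Lemma polyc_sup N c (i j : 'I_n) : supd N -> j = i.+1 :> nat ->
  polyc N c i j = c (lift ord0 ord0) ord0 * N i j.
Proof.
move=> hN hij; rewrite summxE big_ord_recl big_ord_recl big1 ?addr0.
  rewrite !mxE /= /bump /= expr1 (_ : (i == j) = false) ?mulr0 ?add0r //.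
  by apply/eqP => e; move: hij; rewrite e; lia.
move=> k _; rewrite mxE (proj1 (pow_entries hN _ i j)) ?mulr0 //=.
by rewrite /bump /= hij; lia.
Qed.

Definition r0 : 'cV[F]_n := \col_(j < n) ((j <= 1)%N)%:R.
Definition Rof A := solve (A - 1) r0.
Definition Reps : {set 'M[F]_n} :=
  [set A in S0 F n | [forall j : 'I_n, A ord0 j == ((j <= 1)%N)%:R]].

Lemma Rof_in A : A \in S0 F n -> Rof A \in Reps.
Proof.
move=> hA; have hN := supd_S0 hA.
have hrow : forall j, Rof A ord0 j = ((j <= 1)%N)%:R by move=> j; rewrite solve_row // mxE.
rewrite inE; apply/andP; split; last by apply/forallP => j; rewrite hrow.
have h00 := hrow ord0; rewrite /Rof /solve polyc_diag //= in h00.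
have h01 := hrow (lift ord0 ord0); rewrite /Rof /solve (polyc_sup _ hN) //= in h01.
apply/S0P; split.
- by move=> i j hij; rewrite /Rof /solve polyc_low.
- by move=> i; rewrite /Rof /solve polyc_diag.
- move=> i j hij; rewrite /Rof /solve (polyc_sup _ hN hij) mulf_neq0 //.
    by apply/eqP => e; rewrite e mul0r in h01; move/eqP: h01; rewrite eq_sym oner_eq0.
  by apply: (proj2 hN).
Qed.

Lemma commB1 A X : GRing.comm (A - 1) X <-> GRing.comm A X.
Proof.
rewrite /GRing.comm mulrBl mulrBr mul1r mulr1; split => [/addIr|->] //.
Qed.

Lemma Rof_comm A : GRing.comm A (Rof A).
Proof. by apply/commB1; apply: polyc_commN. Qed.

Lemma Reps_S0 : Reps \subset S0 F n.
Proof. by apply/subsetP => A; rewrite inE => /andP []. Qed.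

Lemma Reps_nc : noncommuting Reps.
Proof.
apply/forallP => x; apply/implyP => hx; apply/forallP => y; apply/implyP => hy.
apply/implyP => hxy; apply/negP => /eqP e.
move: hxy; rewrite eq_sym => /eqP; apply.
have hxS : x \in S0 F n by apply: (subsetP Reps_S0).
apply/eqP; rewrite -subr_eq0; apply/eqP; apply: (uniq_row0 (supd_S0 hxS)).
  apply: commrB; apply/commB1 => //; exact: e.
move: hx hy; rewrite !inE => /andP [_ /forallP hx] /andP [_ /forallP hy] j.
by rewrite !mxE (eqP (hx j)) (eqP (hy j)) subrr.
Qed.

Lemma nc_bound (S : {set 'M[F]_n}) : S \subset S0 F n -> noncommuting S -> (#|S| <= #|Reps|)%N.
Proof.
move=> hS hnc; rewrite -(@card_in_imset _ _ Rof).
  apply: subset_leq_card; apply/subsetP => R /imsetP [x hx ->].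
  by apply: Rof_in; apply: (subsetP hS).
move=> x y hx hy e; case: (eqVneq x y) => // hne; exfalso.
have hR := Rof_in (subsetP hS x hx); have hRS := subsetP Reps_S0 _ hR.
have cx : GRing.comm (Rof x - 1) x by apply/commB1; apply: commr_sym; apply: Rof_comm.
have cy : GRing.comm (Rof x - 1) y by apply/commB1; rewrite e; apply: commr_sym; apply: Rof_comm.
have := comm_trans (supd_S0 hRS) cx cy.
move/forallP: hnc => /(_ x) /implyP /(_ hx) /forallP /(_ y) /implyP /(_ hy) /implyP /(_ hne).
by move/eqP.
Qed.

Lemma omega_Reps : omega (S0 F n) = #|Reps|.
Proof.
apply/eqP; rewrite eqn_leq; apply/andP; split.
  by apply/bigmax_leqP => S /andP [h1 h2]; apply: nc_bound.
by rewrite /omega; apply: (@leq_bigmax_cond _ (fun S : {set _} => (S \subset S0 F n) && noncommuting S) (fun S => #|S|) Reps); rewrite Reps_S0 Reps_nc.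
Qed.

Definition Fam (x : 'I_n * 'I_n) : {set F} :=
  if (x.2 <= x.1)%N then [set ((x.1 == x.2)%:R : F)]
  else if (x.1 == 0 :> nat) then [set ((x.2 <= 1)%N%:R : F)]
  else if (x.2 == x.1.+1 :> nat) then [set~ 0] else setT.

Lemma card_Fam x : #|Fam x| =
  ((#|F|.-1) ^ ((0 < x.1) && (x.2 == x.1.+1 :> nat)) *
   #|F| ^ ((0 < x.1) && (x.1.+1 < x.2)))%N.
Proof.
rewrite /Fam; case: x => i j /=.
case: (leqP j i) => h1.
  have e1 : (j == i.+1 :> nat) = false by apply/eqP; lia.
  have e2 : (i.+1 < j)%N = false by apply/negbTE; rewrite -leqNgt; lia.
  by rewrite cards1 e1 e2 !andbF.
case: (posnP i) => h2 /=.
  by rewrite cards1.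
case: eqP => h3.
  have e2 : (i.+1 < j)%N = false by apply/negbTE; rewrite -leqNgt; lia.
  by rewrite cardsC1 e2 muln1 expn1.
have e2 : (i.+1 < j)%N = true by lia.
by rewrite cardsT e2 mul1n expn1.
Qed.

Definition matOf (g : {dffun forall x : 'I_n * 'I_n, F}) : 'M[F]_n :=
  \matrix_(i, j) g (i, j).

Lemma matOf_inj : injective matOf.
Proof.
move=> g1 g2 e; apply/ffunP => [[i j]].
by have := congr1 (fun A : 'M[F]_n => A i j) e; rewrite !mxE.
Qed.

Lemma Reps_fam : Reps = matOf @: [set g in family Fam].
Proof.
apply/setP => A; apply/idP/idP.
  move=> hA; have hS := subsetP Reps_S0 _ hA.
  move: hA; rewrite inE => /andP [_ /forallP hr].
  move/S0P: hS => [H1 H2 H3].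
  apply/imsetP; exists ([ffun x => A x.1 x.2] : {dffun forall x : 'I_n * 'I_n, F}).
    rewrite inE; apply/familyP => [[i j]]; rewrite ffunE /Fam /=.
    case: (leqP j i) => h1.
      case: (ltngtP j i) h1 => // h _.
        by rewrite H1 // (_ : (i == j) = false) ?inE //; apply/eqP => e; move: h; rewrite e; lia.
      by move/val_inj: h => ->; rewrite H2 eqxx inE.
    case: eqP => h2.
      have -> : i = ord0 by apply: val_inj.
      by rewrite (eqP (hr j)) inE.
    case: eqP => h3; rewrite !inE //.
    by apply: H3.
  by apply/matrixP => i j; rewrite !mxE ffunE.
move/imsetP => [g]; rewrite inE => /familyP hg ->.
rewrite inE; apply/andP; split.
  apply/S0P; split.
  - move=> i j hij; rewrite mxE; have := hg (i, j); rewrite /Fam /= ifT; last by lia.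
    by rewrite inE (_ : (i == j) = false) //; apply/eqP => e; move: hij; rewrite e; lia.
  - by move=> i; rewrite mxE; have := hg (i, i); rewrite /Fam /= leqnn eqxx inE => /eqP.
  - move=> i j hij; rewrite mxE; have := hg (i, j); rewrite /Fam /= ifF; last by lia.
    case: eqP => h0.
      by rewrite inE => /eqP ->; rewrite hij h0 oner_eq0.
    by rewrite ifT ?inE //; apply/eqP.
apply/forallP => j; rewrite mxE; have := hg (ord0, j); rewrite /Fam /=.
case: (posnP j) => hj.
  have e : j = ord0 by apply: val_inj.
  by rewrite e /= inE.
by rewrite ifF ?inE //; lia.
Qed.

Lemma card_Reps : #|Reps| = ((#|F| - 1) ^ m * #|F| ^ 'C(m, 2))%N.
Proof.
rewrite Reps_fam card_imset; last exact: matOf_inj.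
rewrite cardsE card_family foldrE big_image.
rewrite (eq_bigr _ (fun x _ => card_Fam x)) big_split /= -!expn_sum cnt1 cnt2 subn1.
by [].
Qed.
End S.

Theorem theorem3p5 (F : finFieldType) (n : nat) (hn : (2 <= n)%N) :
  omega (S0 F n) = ((#|F| - 1) ^ (n - 2) * #|F| ^ 'C(n - 2, 2))%N.
Proof.
case: n hn => [|[|m]] // _.
have e : (m.+2 - 2 = m)%N by lia.
by rewrite omega_Reps card_Reps e.
Qed.
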